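(* Let $A,B,C$ be non-collinear points of the real affine plane. Let $A^{+},A^{-}$ be points on line $\overleftrightarrow{BC}$, $B^{+},B^{-}$ points on line $\overleftrightarrow{CA}$, and $C^{+},C^{-}$ points on line $\overleftrightarrow{AB}$, with $A^{+}\neq C$, $A^{-}\neq B$, $B^{+}\neq A$, $B^{-}\neq C$, $C^{+}\neq B$, $C^{-}\neq A$, and define $$a^{+}=\frac{|BA^{+}|}{|A^{+}C|},\quad b^{+}=\frac{|CB^{+}|}{|B^{+}A|},\quad c^{+}=\frac{|AC^{+}|}{|C^{+}B|},\quad a^{-}=\frac{|CA^{-}|}{|A^{-}B|},\quad b^{-}=\frac{|AB^{-}|}{|B^{-}C|},\quad c^{-}=\frac{|BC^{-}|}{|C^{-}A|}.$$ Let $\ell_1=\overleftrightarrow{B^{+}C^{-}}$, $\ell_2=\overleftrightarrow{C^{+}A^{-}}$, $\ell_3=\overleftrightarrow{A^{+}B^{-}}$, and suppose $$D_1=1-a^{+}a^{-}+b^{-}(1+a^{-})+c^{+}(1+a^{+}),\quad D_2=1-b^{+}b^{-}+c^{-}(1+b^{-})+a^{+}(1+b^{+}),\quad D_3=1-c^{+}c^{-}+a^{-}(1+c^{-})+b^{+}(1+c^{+})$$ are all nonzero (equivalently, no two of the lines are parallel). Let $P=\ell_2\cap\ell_3$, $Q=\ell_3\cap\ell_1$, $R=\ell_1\cap\ell_2$. Then the signed area of triangle $PQR$ is $$|\triangle PQR|=|\triangle ABC|\cdot\frac{\left(a^{+}b^{+}c^{+}+a^{-}b^{-}c^{-}+a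^{+}a^{-}+b^{+}b^{-}+c^{+}c^{-}-1\right)^2}{D_1D_2D_3}.$$
   Context: Segment lengths are signed: for points on one of the lines $\overleftrightarrow{AB}$, $\overleftrightarrow{BC}$, $\overleftrightarrow{CA}$, $|PQ|$ is positive when $\overrightarrow{PQ}$ points in the direction of $\overrightarrow{AB}$, $\overrightarrow{BC}$, $\overrightarrow{CA}$ respectively; $|PP|/|PQ|=0$. Equivalently, e.g. $A^{+}=(B+a^{+}C)/(1+a^{+})$, $A^{-}=(a^{-}B+C)/(1+a^{-})$ as vectors, and similarly for the others. Triangle areas are signed: $|\triangle XYZ|$ and $|\triangle ABC|$ have the same sign exactly when the vertex paths $X$-$Y$-$Z$-$X$ and $A$-$B$-$C$-$A$ traverse their triangles in the same rotational direction. *)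

(* Defs.v *)
From Stdlib Require Import Reals.
Open Scope R_scope.

Definition point := (R * R)%type.

(* signed area of triangle XYZ (positive iff X-Y-Z is counterclockwise) *)
Definition sarea (X Y Z : point) : R :=
  ((fst Y - fst X) * (snd Z - snd X) - (fst Z - fst X) * (snd Y - snd X)) / 2.

Definition collinear (X Y Z : point) : Prop := sarea X Y Z = 0.

Definition on_line (X U V : point) : Prop := collinear U V X.

(* signed ratio |XY| / |YZ| for collinear X, Y, Z with Y <> Z:
   the unique t with Y - X = t (Z - Y), computed by projection. *)
Definition sratio (X Y Z : point) : R :=
  ((fst Y - fst X) * (fst Z - fst Y) + (snd Y - snd X) * (snd Z - snd Y)) /
  ((fst Z - fst Y) * (fst Z - fst Y) + (snd Z - snd Y) * (snd Z - snd Y)).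

(* Main.v *)
Require Import Defs.
From Stdlib Require Import Reals Lra.
Open Scope R_scope.

Definition emb (A B C : point) (x y : R) : point :=
  (fst A + x * (fst B - fst A) + y * (fst C - fst A),
   snd A + x * (snd B - snd A) + y * (snd C - snd A)).

Definition cr (x1 y1 x2 y2 x3 y3 : R) : R :=
  (x2 - x1) * (y3 - y1) - (x3 - x1) * (y2 - y1).

Lemma sarea_emb A B C x1 y1 x2 y2 x3 y3 :
  sarea (emb A B C x1 y1) (emb A B C x2 y2) (emb A B C x3 y3) =
  sarea A B C * cr x1 y1 x2 y2 x3 y3.
Proof. destruct A, B, C; unfold sarea, emb, cr; simpl; field. Qed.

Lemma embA A B C : A = emb A B C 0 0.
Proof. destruct A, B, C; unfold emb; simpl; f_equal; ring. Qed.
Lemma embB A B C : B = emb A B C 1 0.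
Proof. destruct A, B, C; unfold emb; simpl; f_equal; ring. Qed.
Lemma embC A B C : C = emb A B C 0 1.
Proof. destruct A, B, C; unfold emb; simpl; f_equal; ring. Qed.

Lemma emb_ex A B C P : sarea A B C <> 0 -> exists x y, P = emb A B C x y.
Proof.
  intros HS. exists (sarea A P C / sarea A B C), (sarea A B P / sarea A B C).
  destruct A as [a1 a2], B as [b1 b2], C as [c1 c2], P as [p1 p2].
  unfold sarea, emb in *; simpl in *.
  assert (H2 : (b1 - a1) * (c2 - a2) - (c1 - a1) * (b2 - a2) <> 0) by lra.
  f_equal; field; auto.
Qed.

Lemma pair_neq (X Y : point) : X <> Y ->
  (fst X - fst Y) * (fst X - fst Y) + (snd X - snd Y) * (snd X - snd Y) <> 0.
Proof.
  destruct X as [x1 x2], Y as [y1 y2]; simpl; intros H E.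
  apply H. pose proof (Rplus_sqr_eq_0_l (x1 - y1) (x2 - y2)) as H1.
  pose proof (Rplus_sqr_eq_0_l (x2 - y2) (x1 - y1)) as H2. unfold Rsqr in *.
  assert (x1 - y1 = 0) by (apply H1; lra). assert (x2 - y2 = 0) by (apply H2; lra).
  f_equal; lra.
Qed.

Lemma param A B C X Y Z xx xy zx zy :
  collinear X Z Y -> Y <> Z -> X <> Z ->
  X = emb A B C xx xy -> Z = emb A B C zx zy ->
  1 + sratio X Y Z <> 0 /\
  Y = emb A B C ((xx + sratio X Y Z * zx) / (1 + sratio X Y Z))
                ((xy + sratio X Y Z * zy) / (1 + sratio X Y Z)).
Proof.
  intros Hc HYZ HXZ HX HZ.
  pose proof (pair_neq _ _ HYZ) as Hd.
  assert (E : fst Y - fst X = sratio X Y Z * (fst Z - fst Y) /\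
              snd Y - snd X = sratio X Y Z * (snd Z - snd Y)).
  { clear HX HZ HXZ.
    destruct X as [x1 x2], Y as [y1 y2], Z as [z1 z2].
    unfold collinear, sarea, sratio in *; simpl in *.
    assert (Hd' : (z1 - y1) * (z1 - y1) + (z2 - y2) * (z2 - y2) <> 0)
      by (replace ((z1 - y1) * (z1 - y1) + (z2 - y2) * (z2 - y2)) with
          ((y1 - z1) * (y1 - z1) + (y2 - z2) * (y2 - z2)) by ring; auto).
    assert (K : (z1 - y1) * (y2 - x2) - (y1 - x1) * (z2 - y2) = 0) by nra.
    split; apply Rmult_eq_reg_r with
      ((z1 - y1) * (z1 - y1) + (z2 - y2) * (z2 - y2)); auto;
    field_simplify; auto.
    - transitivity ((z2 - y2) * ((z1 - y1) * (y2 - x2) - (y1 - x1) * (z2 - y2)) * -1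
        + ((y1 - x1) * (z1 - y1) + (y2 - x2) * (z2 - y2)) * (z1 - y1)); [ring|].
      rewrite K; ring.
    - transitivity ((z1 - y1) * ((z1 - y1) * (y2 - x2) - (y1 - x1) * (z2 - y2))
        + ((y1 - x1) * (z1 - y1) + (y2 - x2) * (z2 - y2)) * (z2 - y2)); [ring|].
      rewrite K; ring. }
  set (t := sratio X Y Z) in *. destruct E as [E1 E2].
  assert (Ht : 1 + t <> 0).
  { intro H0. apply HXZ. destruct X, Z; simpl in *. f_equal; nra. }
  split; auto.
  subst X Z. destruct A, B, C, Y; unfold emb in *; simpl in *.
  f_equal; apply Rmult_eq_reg_r with (1 + t); auto; field_simplify; auto; nra.
Qed.

Lemma col_swap X Z Y : collinear X Z Y -> collinear Z X Y.
Proof. unfold collinear, sarea; intros H; lra. Qed.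

Lemma neqs A B C : ~ collinear A B C -> A <> B /\ B <> C /\ C <> A.
Proof.
  intros H; repeat split; intro E; subst; apply H; unfold collinear, sarea; field.

Qed.

Lemma solve2 a b c d e f x y : a*x+b*y+c=0 -> d*x+e*y+f=0 -> a*e-b*d<>0 ->
  x = (b*f-c*e)/(a*e-b*d) /\ y = (c*d-a*f)/(a*e-b*d).
Proof.
  intros H1 H2 H3. split; apply Rmult_eq_reg_r with (a*e-b*d); auto;
  field_simplify; auto.
  - apply Rminus_diag_uniq. transitivity (e*(a*x+b*y+c) - b*(d*x+e*y+f)); [ring|].
    rewrite H1, H2; ring.
  - apply Rminus_diag_uniq. transitivity (a*(d*x+e*y+f) - d*(a*x+b*y+c)); [ring|].
    rewrite H1, H2; ring.
Qed.

Theorem theorem5 (A B C Ap Am Bp Bm Cp Cm P Q R0 : point) :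
  ~ collinear A B C ->
  on_line Ap B C -> on_line Am B C ->
  on_line Bp C A -> on_line Bm C A ->
  on_line Cp A B -> on_line Cm A B ->
  Ap <> C -> Am <> B -> Bp <> A -> Bm <> C -> Cp <> B -> Cm <> A ->
  let ap := sratio B Ap C in
  let bp := sratio C Bp A in
  let cp := sratio A Cp B in
  let am := sratio C Am B in
  let bm := sratio A Bm C in
  let cm := sratio B Cm A in
  let D1 := 1 - ap * am + bm * (1 + am) + cp * (1 + ap) in
  let D2 := 1 - bp * bm + cm * (1 + bm) + ap * (1 + bp) in
  let D3 := 1 - cp * cm + am * (1 + cm) + bp * (1 + cp) in
  D1 <> 0 -> D2 <> 0 -> D3 <> 0 ->
  (* l1 = Bp Cm, l2 = Cp Am, l3 = Ap Bm *)
  on_line P Cp Am -> on_line P Ap Bm ->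
  on_line Q Ap Bm -> on_line Q Bp Cm ->
  on_line R0 Bp Cm -> on_line R0 Cp Am ->
  sarea P Q R0 =
    sarea A B C *
    ((ap * bp * cp + am * bm * cm + ap * am + bp * bm + cp * cm - 1) ^ 2 /
     (D1 * D2 * D3)).
Proof.
  intros HABC HAp HAm HBp HBm HCp HCm nAp nAm nBp nBm nCp nCm
    ap bp cp am bm cm D1 D2 D3 HD1 HD2 HD3 HP1 HP2 HQ1 HQ2 HR1 HR2.
  destruct (neqs _ _ _ HABC) as [nAB [nBC nCA]].
  assert (HS : sarea A B C <> 0) by exact HABC.
  destruct (param A B C B Ap C 1 0 0 1 HAp nAp nBC (embB A B C) (embC A B C)) as [hAp eAp].
  destruct (param A B C C Am B 0 1 1 0 (col_swap _ _ _ HAm) nAm (not_eq_sym nBC) (embC A B C) (embB A B C)) as [hAm eAm].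
  destruct (param A B C C Bp A 0 1 0 0 HBp nBp nCA (embC A B C) (embA A B C)) as [hBp eBp].
  destruct (param A B C A Bm C 0 0 0 1 (col_swap _ _ _ HBm) nBm (not_eq_sym nCA) (embA A B C) (embC A B C)) as [hBm eBm].
  destruct (param A B C A Cp B 0 0 1 0 HCp nCp nAB (embA A B C) (embB A B C)) as [hCp eCp].
  destruct (param A B C B Cm A 1 0 0 0 (col_swap _ _ _ HCm) nCm (not_eq_sym nAB) (embB A B C) (embA A B C)) as [hCm eCm].
  change (sratio B Ap C) with ap in hAp, eAp.
  change (sratio C Am B) with am in hAm, eAm.
  change (sratio C Bp A) with bp in hBp, eBp.
  change (sratio A Bm C) with bm in hBm, eBm.
  change (sratio A Cp B) with cp in hCp, eCp.
  change (sratio B Cm A) with cm in hCm, eCm.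
  subst D1 D2 D3.
  clearbody ap bp cp am bm cm.
  clear HAp HAm HBp HBm HCp HCm nAp nAm nBp nBm nCp nCm.
  subst Ap Am Bp Bm Cp Cm.
  destruct (emb_ex A B C P HS) as [xp [yp ->]].
  destruct (emb_ex A B C Q HS) as [xq [yq ->]].
  destruct (emb_ex A B C R0 HS) as [xr [yr ->]].
  unfold on_line, collinear in *.
  rewrite !sarea_emb in *.
  apply Rmult_integral in HP1, HP2, HQ1, HQ2, HR1, HR2.
  destruct HP1 as [?|HP1]; [contradiction|].
  destruct HP2 as [?|HP2]; [contradiction|].
  destruct HQ1 as [?|HQ1]; [contradiction|].
  destruct HQ2 as [?|HQ2]; [contradiction|].
  destruct HR1 as [?|HR1]; [contradiction|].
  destruct HR2 as [?|HR2]; [contradiction|].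
  unfold cr in *.

  Ltac lin H k := rewrite <- (Rmult_0_r k), <- H; field; repeat split; auto.
  assert (LP2 : -(1+cp) * xp + (am-cp) * yp + cp = 0) by lin HP1 ((1+cp)*(1+am)).
  assert (LP3 : (ap-bm) * xp - (1+bm) * yp + bm = 0) by lin HP2 ((1+ap)*(1+bm)).
  assert (LQ3 : (ap-bm) * xq - (1+bm) * yq + bm = 0) by lin HQ1 ((1+ap)*(1+bm)).
  assert (LQ1 : (1+cm) * xq + (1+bp) * yq - 1 = 0) by lin HQ2 ((1+bp)*(1+cm)).
  assert (LR1 : (1+cm) * xr + (1+bp) * yr - 1 = 0) by lin HR1 ((1+bp)*(1+cm)).
  assert (LR2 : -(1+cp) * xr + (am-cp) * yr + cp = 0) by lin HR2 ((1+cp)*(1+am)).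
  assert (LP2' : (-(1+cp)) * xp + (am-cp) * yp + cp = 0) by lra.
  assert (LP3' : (ap-bm) * xp + (-(1+bm)) * yp + bm = 0) by lra.
  assert (LQ3' : (ap-bm) * xq + (-(1+bm)) * yq + bm = 0) by lra.
  assert (LQ1' : (1+cm) * xq + (1+bp) * yq + -1 = 0) by lra.
  assert (LR1' : (1+cm) * xr + (1+bp) * yr + -1 = 0) by lra.
  assert (LR2' : (-(1+cp)) * xr + (am-cp) * yr + cp = 0) by lra.
  assert (d1 : (-(1+cp)) * (-(1+bm)) - (am-cp)*(ap-bm) <> 0).
  { intro E; apply HD1; rewrite <- E; ring. }
  assert (d2 : (ap-bm) * (1+bp) - (-(1+bm))*(1+cm) <> 0).
  { intro E; apply HD2; rewrite <- E; ring. }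
  assert (d3 : (1+cm) * (am-cp) - (1+bp)*(-(1+cp)) <> 0).
  { intro E; apply HD3; rewrite <- E; ring. }
  destruct (solve2 _ _ _ _ _ _ _ _ LP2' LP3' d1) as [-> ->].
  destruct (solve2 _ _ _ _ _ _ _ _ LQ3' LQ1' d2) as [-> ->].
  destruct (solve2 _ _ _ _ _ _ _ _ LR1' LR2' d3) as [-> ->].
  f_equal. field. repeat split; auto.
Qed.
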